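(* Let $a<b$ be two $n$-bit integers. Then $\Pr[I(a,b,\vec e_{\mathsf a})]<\frac{8}{b-a}$.
   Context: Bits of $n$-bit integers are indexed $1$ (least significant) to $n$ (most significant). For an energy vector $\vec e=(e_1,\dots,e_n)$, an inexact comparison of $u,v$ reads each bit $j$ of $u$ and of $v$ independently, flipped with probability $2^{-e_j}$, and orders $u,v$ by the read values (the most significant bit at which the read values differ). $I(u,v,\vec e)$ is the event that this comparison gives the wrong order. $\vec e_{\mathsf a}=(1,2,\dots,n)$, i.e. bit $j$ gets energy $j$ and is flipped with probability $2^{-j}$. *)

(* Defs.v *)
From mathcomp Require Import all_boot all_order all_algebra.
Set Implicit Arguments. Unset Strict Implicit. Unset Printing Implicit Defensive.
Import Order.TTheory GRing.Theory Num.Theory.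
Local Open Scope ring_scope.

(* Bit j (0-indexed, j < n) of the n-bit integer x; paper's bit index is j+1. *)
Definition bit (x j : nat) : bool := odd (x %/ 2 ^ j).

Definition read (n : nat) (x : nat) (f : {ffun 'I_n -> bool}) : nat :=
  (\sum_(j < n) (bit x j (+) f j) * 2 ^ j)%N.

Definition pat_prob (R : realFieldType) (n : nat) (p : 'I_n -> R)
    (f : {ffun 'I_n -> bool}) : R :=
  \prod_(j < n) (if f j then p j else 1 - p j).

(* Flip probability 2^{-e_j} for energy vector e (e j = energy of bit j+1). *)
Definition flipp (R : realFieldType) (n : nat) (e : 'I_n -> nat) (j : 'I_n) : R :=
  (2 ^+ e j)^-1.

(* Pr[I(u,v,e)] for u < v : probability that the inexact comparison puts
   u above v, i.e. read(u) > read(v) (ordering by the most significant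
   differing bit of the read values = numeric order of the read values). *)
Definition PrI (R : realFieldType) (n : nat) (u v : nat) (e : 'I_n -> nat) : R :=
  \sum_(fu : {ffun 'I_n -> bool}) \sum_(fv : {ffun 'I_n -> bool})
     (if (read v fv < read u fu)%N then pat_prob (flipp R e) fu * pat_prob (flipp R e) fv else 0).

Definition e_a (n : nat) (j : 'I_n) : nat := (j + 1)%N.

(* Main.v *)
Require Import Defs.
From mathcomp Require Import all_boot all_order all_algebra.
From mathcomp Require Import zify ring lra.
From Stdlib Require Import Lia.
Import Order.TTheory GRing.Theory Num.Theory.

Lemma binexp x k : (\sum_(j < k) bit x j * 2 ^ j)%N = x %% 2 ^ k.
Proof.
elim: k => [|k IH]; first by rewrite big_ord0 expn0 modn1.
rewrite big_ord_recr /= IH /bit.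
have E : x = (x %/ 2 ^ k.+1) * 2 ^ k.+1 + (odd (x %/ 2 ^ k) * 2 ^ k + x %% 2 ^ k).
  rewrite {1}(divn_eq x (2 ^ k)) {1}(divn_eq (x %/ 2 ^ k) 2) modn2.
  rewrite expnSr divnMA; set q := x %/ 2 ^ k; set P := 2 ^ k.
  move: (odd q) => o; set q2 := q %/ 2; set r := x %% P.
  case: o; nia.
have lt : (odd (x %/ 2 ^ k) * 2 ^ k + x %% 2 ^ k < 2 ^ k.+1)%N.
  rewrite expnS mul2n -addnn -addnS; apply: leq_add; last by rewrite ltn_mod expn_gt0.
  by case: odd; rewrite ?mul1n ?mul0n.
by rewrite {3}E modnMDl (modn_small lt) addnC.
Qed.

Lemma lowlt m (c : nat -> bool) : (\sum_(j < m) c j * 2 ^ j < 2 ^ m)%N.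
Proof.
elim: m => [|m IH]; first by rewrite big_ord0.
rewrite big_ord_recr /= expnS mul2n -addnn.
apply: leq_trans (_ : (\sum_(i < m) c i * 2 ^ i).+1 + 2 ^ m <= _)%N.
  by rewrite addSn ltnS leq_add2l; case: (c m); rewrite ?mul1n ?mul0n.
by rewrite leq_add2r.
Qed.

Lemma lowlt2 n m (c : 'I_n -> bool) : (m <= n)%N -> (\sum_(j < n | (j < m)%N) c j * 2 ^ j < 2 ^ m)%N.
Proof.
move=> mn; apply: (@leq_ltn_trans (\sum_(j < n | (j < m)%N) 2 ^ j)).
  by apply: leq_sum => j _; case: (c j); rewrite ?mul1n ?mul0n.
rewrite -(big_ord_widen n (fun j => 2 ^ j)%N mn).
have := lowlt m (fun _ => true).
by under eq_bigr do rewrite mul1n.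
Qed.

Lemma readsplit n m (f : {ffun 'I_n -> bool}) :
  (forall j : 'I_n, (m <= j)%N -> f j = false) ->
  forall x, read x f = (\sum_(j < n | (j < m)%N) (bit x j (+) f j) * 2 ^ j
     + \sum_(j < n | ~~ (j < m)%N) bit x j * 2 ^ j)%N.
Proof.
move=> hf x; rewrite /read (bigID (fun j : 'I_n => (j < m)%N)) /=.
congr (_ + _).
apply: eq_bigr => j hj; by rewrite hf ?addbF // leqNgt.
Qed.

Lemma key n m a b (fu fv : {ffun 'I_n -> bool}) :
  (a < b)%N -> (b < 2 ^ n)%N -> (2 ^ m.+1 <= b - a)%N ->
  (forall j : 'I_n, (m <= j)%N -> fu j = false) ->
  (forall j : 'I_n, (m <= j)%N -> fv j = false) ->
  (read a fu <= read b fv)%N.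
Proof.
move=> ab bn mab hu hv.
have mn : (m <= n)%N.
  have : (2 ^ m.+1 < 2 ^ n)%N.
    by apply: leq_ltn_trans mab _; apply: leq_ltn_trans bn; apply: leq_subr.
  by rewrite ltn_exp2l //; lia.
have dec x : (x < 2 ^ n)%N -> x = (\sum_(j < m) bit x j * 2 ^ j + \sum_(j < n | ~~ (j < m)%N) bit x j * 2 ^ j)%N.
  move=> xn; rewrite -{1}(modn_small xn) -binexp (bigID (fun j : 'I_n => (j < m)%N)) /=.
  by rewrite (big_ord_widen n (fun j => bit x j * 2 ^ j)%N mn).
have an : (a < 2 ^ n)%N by apply: ltn_trans bn.
move: (dec a an) (dec b bn) mab.
rewrite (@readsplit _ _ _ hu a) (@readsplit _ _ _ hv b).
set La := (\sum_(j < n | _) (bit a j (+) _) * 2 ^ j)%N.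
set Lb := (\sum_(j < n | _) (bit b j (+) _) * 2 ^ j)%N.
set L0a := (\sum_(j < m) bit a j * 2 ^ j)%N.
set L0b := (\sum_(j < m) bit b j * 2 ^ j)%N.
set Ha := (\sum_(j < n | _) _)%N.
set Hb := (\sum_(j < n | _) _)%N.
have h1 : (La < 2 ^ m)%N by apply: lowlt2.
have h2 : (L0b < 2 ^ m)%N by apply: lowlt.
rewrite expnS => ea eb.
lia.
Qed.
Local Open Scope ring_scope.


Lemma sumP (R : realFieldType) n (p : 'I_n -> R) : \sum_(f : {ffun 'I_n -> bool}) pat_prob p f = 1.
Proof.
rewrite /pat_prob -(bigA_distr_bigA (fun i (b : bool) => if b then p i else 1 - p i)) /=.
by apply: big1 => i _; rewrite big_bool /= addrC subrK.
Qed.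

Lemma marg (R : realFieldType) n (p : 'I_n -> R) j0 :
  \sum_(f : {ffun 'I_n -> bool}) (if f j0 then pat_prob p f else 0) = p j0.
Proof.
have E : forall f : {ffun 'I_n -> bool}, (if f j0 then pat_prob p f else 0) =
   \prod_i (if i == j0 then (if f i then p i else 0) else (if f i then p i else 1 - p i)).
  move=> f; rewrite /pat_prob (bigD1 j0) //= [RHS](bigD1 j0) //= eqxx.
  rewrite [X in _ = _ * X](eq_bigr (fun i => if f i then p i else 1 - p i)); last first.
    by move=> i /negbTE ->.
  by case: (f j0); rewrite ?mul0r.
under eq_bigr do rewrite E.
rewrite -(bigA_distr_bigA (fun i (b : bool) => (if i == j0 then (if b then p i else 0) else (if b then p i else 1 - p i)))) /=.
rewrite (bigD1 j0) //= eqxx big_bool /= addr0 big1 ?mulr1 // => i /negbTE ->.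
by rewrite big_bool /= addrC subrK.
Qed.

Lemma ppos (R : realFieldType) n (p : 'I_n -> R) f : (forall j, 0 <= p j <= 1) -> 0 <= pat_prob p f.
Proof.
move=> hp; apply: prodr_ge0 => j _; case: (f j); have /andP[h0 h1] := hp j => //.
by rewrite subr_ge0.
Qed.

Definition bad {n} m (f : {ffun 'I_n -> bool}) := [exists j : 'I_n, (m <= j)%N && f j].

Lemma badle (R : realFieldType) n m (p : 'I_n -> R) : (forall j, 0 <= p j <= 1) ->
  \sum_(f : {ffun 'I_n -> bool}) (if bad m f then pat_prob p f else 0)
   <= \sum_(j < n | (m <= j)%N) p j.
Proof.
move=> hp.
apply: (@le_trans _ _ (\sum_(f : {ffun 'I_n -> bool}) \sum_(j < n | (m <= j)%N) (if f j then pat_prob p f else 0))).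
  apply: ler_sum => f _; rewrite /bad.
  case: existsP => [[j /andP[hj fj]] | _]; last first.
    by apply: sumr_ge0 => i _; case: (f i) => //; exact: (@ppos _ _ _ _ hp).
  rewrite (bigD1 j) //= fj lerDl; apply: sumr_ge0 => i _; case: (f i) => //; exact: (@ppos _ _ _ _ hp).
rewrite exchange_big /=; apply: ler_sum => j _; by rewrite marg.
Qed.

Lemma geom_eq (R : realFieldType) m n : \sum_(j < n | (m <= j)%N) (2 ^+ (j + 1))^-1 + (2 ^+ (maxn m n))^-1 = (2 ^+ m)^-1 :> R.
Proof.
elim: n => [|n IH]; first by rewrite big_ord0 add0r maxn0.
rewrite big_mkcond big_ord_recr /= -big_mkcond /=.
case: (leqP m n) => hmn.
  rewrite -addrA -IH (maxn_idPr hmn) (maxn_idPr (leqW hmn)) addn1; congr (_ + _).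
  rewrite exprS invfM.
  have h2 : (2 : R) != 0 by rewrite pnatr_eq0.
  field; rewrite expf_eq0 negb_and h2 orbT //.
rewrite addr0 -IH; congr (_ + _).
by rewrite (maxn_idPl (ltnW hmn)) (maxn_idPl hmn).
Qed.

Lemma geom (R : realFieldType) m n : \sum_(j < n | (m <= j)%N) (2 ^+ (j + 1))^-1 < (2 ^+ m)^-1 :> R.
Proof.
rewrite -(geom_eq R m n) ltrDl invr_gt0 exprn_gt0 //.
Qed.

Import Order.TTheory GRing.Theory Num.Theory.
Theorem lemma3 (R : realFieldType) (n a b : nat) :
  (a < b)%N -> (b < 2 ^ n)%N ->
  PrI R a b (@e_a n) < 8 / (b - a)%:R.
Proof.
move=> ab bn.
set P := pat_prob (flipp R (@e_a n)).
have hp : forall j, 0 <= flipp R (@e_a n) j <= 1.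
  move=> j; rewrite /flipp invr_ge0 exprn_ge0 //= invf_le1 ?exprn_gt0 //.
  by rewrite exprn_ege1 // ler1n.
have Pge0 f : 0 <= P f by apply: ppos.
have dpos : (0 < b - a)%N by rewrite subn_gt0.
have dR : 0 < (b - a)%:R :> R by rewrite ltr0n.
case: (leqP (b - a) 1) => d1.
  have -> : (b - a = 1)%N by lia.
  rewrite divr1.
  apply: (@le_lt_trans _ _ 1); last by rewrite ltr1n.
  rewrite /PrI.
  apply: (@le_trans _ _ (\sum_(fu : {ffun 'I_n -> bool}) \sum_(fv : {ffun 'I_n -> bool}) P fu * P fv)).
    apply: ler_sum => fu _; apply: ler_sum => fv _; case: ifP => _ //.
    by apply: mulr_ge0.
  under eq_bigr do rewrite -mulr_sumr sumP mulr1.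
  by rewrite sumP.
set d := (b - a)%N in dpos dR d1 *.
set t := trunc_log 2 d.
have t1 : (2 ^ t <= d)%N by apply: trunc_logP.
have t2 : (d < 2 ^ t.+1)%N by apply: trunc_log_ltn.
have t0 : (0 < t)%N.
  case: (posnP t) t2 => // ->; rewrite expn1; lia.
set m := t.-1.
have tm : t = m.+1 by rewrite /m prednK.
rewrite tm in t1 t2.
pose B (f : {ffun 'I_n -> bool}) := if bad m f then P f else 0.
have Bad : \sum_f B f < (2 ^+ m)^-1.
  apply: (@le_lt_trans _ _ (\sum_(j < n | (m <= j)%N) flipp R (@e_a n) j)).
    exact: badle.
  exact: geom.
have H1 : PrI R a b (@e_a n) <= \sum_f B f + \sum_f B f.
  rewrite /PrI.
  apply: (@le_trans _ _ (\sum_(fu : {ffun 'I_n -> bool}) \sum_(fv : {ffun 'I_n -> bool}) (B fu * P fv + P fu * B fv))).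
    apply: ler_sum => fu _; apply: ler_sum => fv _; case: ifP => hr; last first.
      by rewrite /B; case: (bad m fu); case: (bad m fv); rewrite ?mul0r ?mulr0 ?addr0 ?add0r //;
         apply: addr_ge0 || apply: mulr_ge0; rewrite ?mulr_ge0.
    have : bad m fu || bad m fv.
      apply/negPn/negP => /norP [/existsPn hu /existsPn hv].
      have := @key n m a b fu fv ab bn t1.
      have hu' : forall j : 'I_n, (m <= j)%N -> fu j = false.
        by move=> j hj; move: (hu j); rewrite hj /= => /negbTE.
      have hv' : forall j : 'I_n, (m <= j)%N -> fv j = false.
        by move=> j hj; move: (hv j); rewrite hj /= => /negbTE.
      by move=> /(_ hu' hv'); rewrite leqNgt hr.
    rewrite /B; case/orP => ->.
      by rewrite lerDl; case: (bad m fv); rewrite ?mulr0 // mulr_ge0.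
    by rewrite lerDr; case: (bad m fu); rewrite ?mul0r // mulr_ge0.
  rewrite le_eqVlt; apply/orP; left; apply/eqP.
  under eq_bigr do rewrite big_split /= -!mulr_sumr sumP mulr1.
  by rewrite big_split /= -mulr_suml sumP mul1r.
apply: (le_lt_trans H1).
have zpos : (0 : R) < 2 ^+ m by rewrite exprn_gt0.
have yz : (2 ^+ m)^-1 * 2 ^+ m = 1 :> R by rewrite mulVf // gt_eqF.
have y0 : (0 : R) <= (2 ^+ m)^-1 by rewrite invr_ge0 ltW.
have dle : (d%:R : R) <= 2 ^+ m * 2 * 2.
  by rewrite -exprSr -exprSr -natrX ler_nat ltnW.
apply: (@lt_le_trans _ _ (2 * (2 ^+ m)^-1)); first lra.
rewrite ler_pdivlMr //.
move: (2 ^+ m) (((2 : R) ^+ m)^-1) zpos yz y0 dle => z y *.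
nra.
Qed.
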